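(* Let $G$ be a finite simple graph with initial configuration $c_0:V(G)\to\mathbb{Z}$, and $(c_t)_{t\ge0}$ the configurations of the diffusion process. If there exists a constant $M$ such that $|c_t(u)-c_t(v)|\leq M$ for all adjacent $u,v$ and all $t\geq 0$, then the chip configurations are eventually periodic.
   Context: Diffusion process: $c_{t+1}(u)=c_t(u)-|\{w\in N(u): c_t(u)>c_t(w)\}|+|\{w\in N(u): c_t(u)<c_t(w)\}|$ for all $u$ simultaneously. Eventually periodic means there exist $t\ge0$, $p\ge1$ with $c_{t+p}=c_t$. *)

(* Defs.v *)
From mathcomp Require Import all_boot all_order all_algebra.
Set Implicit Arguments. Unset Strict Implicit. Unset Printing Implicit Defensive.
Import Order.TTheory GRing.Theory Num.Theory.
Local Open Scope ring_scope.

Definition simple_graph (T : finType) (e : rel T) : Prop :=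
  symmetric e /\ irreflexive e.

Definition diffuse_step (T : finType) (e : rel T) (c : T -> int) : T -> int :=
  fun u => c u - (#|[pred w | e u w && (c w < c u)]|)%:Z
               + (#|[pred w | e u w && (c u < c w)]|)%:Z.

Definition config (T : finType) (e : rel T) (c0 : T -> int) (t : nat) : T -> int :=
  iter t (diffuse_step e) c0.

Definition eventually_periodic (T : finType) (e : rel T) (c0 : T -> int) : Prop :=
  exists t p : nat, (1 <= p)%N /\ config e c0 (t + p) = config e c0 t.

(* Main.v *)
Require Import Defs.
From mathcomp Require Import all_boot all_order all_algebra zify.
From Stdlib Require Import FunctionalExtensionality.
Import Order.TTheory GRing.Theory Num.Theory.
Local Open Scope ring_scope.

Lemma card_as_sum (T : finType) (C : {set T}) (P : pred T) :
  (forall x, P x -> x \in C) ->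
  (#|P|%:Z) = \sum_(x in C) ((P x : nat)%:Z).
Proof.
move=> hP.
rewrite -sum1_card -natz natr_sum (big_mkcond (mem C)) (big_mkcond (mem P)) /=.
apply: eq_bigr => x _.
have -> : (x \in P) = P x by [].
case Px: (P x); first by rewrite (hP _ Px).
by case: (x \in C).
Qed.

Lemma step_sum (T : finType) (e : rel T) (he : symmetric e) (C : {set T})
  (hC : forall w x, w \in C -> e w x -> x \in C) (c : T -> int) :
  \sum_(w in C) diffuse_step e c w = \sum_(w in C) c w.
Proof.
set f := fun w x => ((e w x && (c w < c x) : nat)%:Z - (e w x && (c x < c w) : nat)%:Z).
have H1 : \sum_(w in C) diffuse_step e c w =
   \sum_(w in C) c w + \sum_(w in C) \sum_(x in C) f w x.
  rewrite -big_split; apply: eq_bigr => w wC /=.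
  rewrite /diffuse_step /f sumrB.
  rewrite (@card_as_sum _ C); last by move=> x /andP[/(hC _ _ wC)].
  rewrite (@card_as_sum _ C); last by move=> x /andP[/(hC _ _ wC)].
  by rewrite /= addrAC -addrA.
have H2 : \sum_(w in C) \sum_(x in C) f w x = 0.
  set S := \sum_(w in C) _.
  have : S = - S.
    rewrite {1}/S exchange_big /= -sumrN; apply: eq_bigr => x _.
    rewrite -sumrN; apply: eq_bigr => y _.
    by rewrite /f (he x y) opprB.
  lia.
by rewrite H1 H2 addr0.
Qed.

Lemma fin_bound (T : finType) (f : T -> nat -> int) :
  (forall x, exists K, forall t, `|f x t| <= K) ->
  exists K, forall x t, `|f x t| <= K.
Proof.
move=> H.
suff [K HK] : exists K, forall x, x \in enum T -> forall t, `|f x t| <= K.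
  by exists K => x t; apply: HK; rewrite mem_enum.
elim: (enum T) => [|y s [K HK]]; first by exists 0.
have [Ky HKy] := H y.
exists (Num.max K Ky) => x; rewrite inE => /orP[/eqP -> | xs] t.
  by rewrite le_max HKy orbT.
by rewrite le_max HK.
Qed.

Lemma configS (T : finType) (e : rel T) c0 t :
  config e c0 t.+1 = diffuse_step e (config e c0 t).
Proof. by rewrite /config iterS. Qed.

Lemma conserved (T : finType) (e : rel T) (he : symmetric e) c0 (u : T) t :
  \sum_(w in [set w | connect e u w]) config e c0 t w =
  \sum_(w in [set w | connect e u w]) c0 w.
Proof.
elim: t => [//|t IH]; rewrite configS step_sum //.
move=> w x; rewrite !inE => uw wx.
by apply: connect_trans uw (connect1 wx).
Qed.

Lemma path_bound (T : finType) (e : rel T) c0 (M : int)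
  (HM : forall (t : nat) (u v : T), e u v ->
      `|config e c0 t u - config e c0 t v| <= M) t :
  forall p x, path e x p ->
  `|config e c0 t x - config e c0 t (last x p)| <= M *+ size p.
Proof.
elim=> [|y p IH] x /=; first by rewrite subrr normr0.
move=> /andP[exy pp].
apply: le_trans (ler_distD (config e c0 t y) _ _) _.
by rewrite mulrS lerD // ?HM // IH.
Qed.

Lemma vertex_bound (T : finType) (e : rel T) (he : symmetric e) c0 (M : int)
  (HM : forall (t : nat) (u v : T), e u v ->
      `|config e c0 t u - config e c0 t v| <= M) (u : T) :
  exists B, forall t, `|config e c0 t u| <= B.
Proof.
set C := [set w | connect e u w].
have [K HK] : exists K : int, forall w t, `|(if connect e u w then config e c0 t u - config e c0 t w else 0)| <= K.
  apply: fin_bound => w.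
  case: (boolP (connect e u w)) => [/connectP [p pp ->] | _].
    by exists (M *+ size p) => t; apply: path_bound.
  by exists 0 => t; rewrite normr0.
exists (K *+ #|C| + `|\sum_(w in C) c0 w|) => t.
have uC : u \in C by rewrite inE connect0.
have n1 : (0 < #|C|)%N by apply/card_gt0P; exists u.
have E : config e c0 t u *+ #|C| =
     \sum_(w in C) (config e c0 t u - config e c0 t w) + \sum_(w in C) c0 w.
  by rewrite -(@conserved _ _ he c0 u t) -big_split /= -sumr_const; apply: eq_bigr => w _; rewrite subrK.
have : `|config e c0 t u *+ #|C| | <= K *+ #|C| + `|\sum_(w in C) c0 w|.
  rewrite E; apply: le_trans (ler_normD _ _) _; rewrite lerD2r.
  apply: le_trans (ler_norm_sum _ _ _) _.
  rewrite -sumr_const; apply: ler_sum => w; rewrite inE => uw.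
  by have := HK w t; rewrite uw.
apply: le_trans; rewrite normrMn.
case: #|C| n1 => // n _; rewrite mulrS lerDl.
by apply: mulrn_wge0.
Qed.

Theorem lemma4 (T : finType) (e : rel T) (c0 : T -> int) :
  simple_graph e ->
  (exists M : int, forall (t : nat) (u v : T), e u v ->
      `|config e c0 t u - config e c0 t v| <= M) ->
  eventually_periodic e c0.
Proof.
move=> [he _] [M HM].
have [B HB] := @fin_bound T (fun u t => config e c0 t u)
   (fun u => @vertex_bound T e he c0 M HM u).
set N := absz B.
have HN : forall u t, - (N%:Z) <= config e c0 t u <= N%:Z.
  move=> u t; have := HB u t; rewrite /N; lia.
pose code (t : nat) : {ffun T -> 'I_(N + N).+1} :=
  [ffun u => inord (absz (config e c0 t u + N%:Z))].
pose g (i : 'I_(#|{ffun T -> 'I_(N + N).+1}|.+1)) := code (val i).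
have Hg : ~~ injectiveb g.
  apply/negP => /injectiveP /leq_card; rewrite card_ord => h; have := ltnn #|{ffun T -> 'I_(N + N).+1}|; by rewrite h.
have [i [j ij gij]] := elimT (injectivePn g) Hg.
have Eij : forall u, config e c0 i u = config e c0 j u.
  move=> u; have := congr1 (fun f : {ffun T -> 'I_(N + N).+1} => val (f u)) gij.
  rewrite /g /code /= !ffunE /= !inordK.
  - by have := HN u i; have := HN u j; lia.
  - by have := HN u j; lia.
  - by have := HN u i; lia.
have key : forall a b : nat, (a < b)%N -> config e c0 a = config e c0 b ->
    eventually_periodic e c0.
  move=> a b ab E; exists a, (b - a)%N; split; first lia.
  by rewrite subnKC ?E // ltnW.
have Ef : config e c0 i = config e c0 j.
  by apply: functional_extensionality.
case: (ltngtP i j) => h.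
- exact: key h Ef.
- exact: key h (esym Ef).
- by move: ij; rewrite -val_eqE /= h eqxx.
Qed.
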